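(* Let $\mathcal W$ be a monotonic game on $[n]$, $i\neq j$ players, and $\hat{\mathcal W}$ the game obtained by imposing a symmetric weak quarrel between $i$ and $j$. Then the Penrose–Banzhaf measure satisfies $\hat\psi^{PB}_i\le\psi^{PB}_i$ and $\hat\psi^{PB}_j\le\psi^{PB}_j$, where $\psi^{PB}$ and $\hat\psi^{PB}$ denote the measure computed in $\mathcal W$ and $\hat{\mathcal W}$ respectively.
   Context: Players are $[n]=\{1,\dots,n\}$. A binary voting game on $[n]$ is identified with its collection $\mathcal W\subseteq 2^{[n]}$ of winning sets ($S\in\mathcal W$ means the division in which exactly the members of $S$ vote YES has outcome YES). It is monotonic if $T\subseteq S$ and $T\in\mathcal W$ imply $S\in\mathcal W$. Player $i$ is YES-decisive for $S$ in a game $\mathcal W$ if $i\in S$, $S\in\mathcal W$ and $S\setminus\{i\}\notin\mathcal W$. Symmetric weak quarrel between $i$ and $j$: for every $S\subseteq[n]\setminus\{i,j\}$, $S\cup\{i,j\}\in\hat{\mathcal W}\iff (S\cup\{i\}\in\mathcal W\text{ or }S\cup\{j\}\in\mathcal W)$; $S\in\hat{\mathcal W}\iff (S\cup\{i\}\in\mathcal W\text{ and }S\cup\{j\}\in\mathcal W)$; $S\cup\{i\}\in\hat{\mathcal W}\iff S\cup\{i\}\in\mathcal W$; $S\cup\{j\}\in\hat{\mathcal W}\iff S\cup\{j\}\in\mathcal W$. Penrose–Banzhaf measure: $\psi^{PB}_i=\frac{1}{2^{n-1}}\#\{S\subseteq[n]: i\in S,\ i\text{ is YES-decisive for }S\}$.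 *)

(* Defs.v *)
From mathcomp Require Import all_boot all_order all_algebra.
Set Implicit Arguments. Unset Strict Implicit. Unset Printing Implicit Defensive.
Import GRing.Theory Num.Theory.

(* A binary voting game on players 'I_n is its family of winning sets. *)
Definition game (n : nat) := {set {set 'I_n}}.

Definition monotonic n (W : game n) : Prop :=
  forall S T : {set 'I_n}, T \subset S -> T \in W -> S \in W.

Definition yes_decisive n (W : game n) (i : 'I_n) (S : {set 'I_n}) : bool :=
  [&& i \in S, S \in W & (S :\ i) \notin W].

Definition sym_weak_quarrel n (W Wh : game n) (i j : 'I_n) : Prop :=
  forall S : {set 'I_n}, i \notin S -> j \notin S ->
    [/\ ((S :|: [set i; j]) \in Wh) = ((S :|: [set i]) \in W) || ((S :|: [set j]) \in W),
        (S \in Wh) = ((S :|: [set i]) \in W) && ((S :|: [set j]) \in W),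
        ((S :|: [set i]) \in Wh) = ((S :|: [set i]) \in W) &
        ((S :|: [set j]) \in Wh) = ((S :|: [set j]) \in W)].

Definition PB n (W : game n) (i : 'I_n) : rat :=
  (#|[set S : {set 'I_n} | (i \in S) && yes_decisive W i S]|)%:R / (2 ^ n.-1)%:R.

(* Main.v *)
Require Import Defs.
From mathcomp Require Import all_boot all_order all_algebra.
Import GRing.Theory Num.Theory.
Local Open Scope ring_scope.

Lemma quarrel_sym n (W Wh : game n) (i j : 'I_n) :
  sym_weak_quarrel W Wh i j -> sym_weak_quarrel W Wh j i.
Proof.
move=> H S Hj Hi; have [h1 h2 h3 h4] := H S Hi Hj.
have E : [set j; i] = [set i; j] by apply/setP=> x; rewrite !inE orbC.
by split=> //; rewrite ?E ?h1 ?h2 1?orbC // andbC.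
Qed.

Lemma dec_sub n (W Wh : game n) (i j : 'I_n) :
  monotonic W -> i != j -> sym_weak_quarrel W Wh i j ->
  [set S : {set 'I_n} | (i \in S) && yes_decisive Wh i S] \subset
  [set S : {set 'I_n} | (i \in S) && yes_decisive W i S].
Proof.
move=> mon nij Q; apply/subsetP=> S; rewrite !inE /yes_decisive.
case/and4P=> iS _ SW nSW; rewrite iS /=.
set T := S :\: [set i; j].
have iT : i \notin T by rewrite !inE eqxx.
have jT : j \notin T by rewrite !inE eqxx orbT.
have [h1 h2 h3 h4] := Q T iT jT.
have nji : j != i by rewrite eq_sym.
case jS: (j \in S).
- have ES : S = T :|: [set i; j].
    by apply/setP=> x; rewrite !inE; have [->|xi] := eqVneq x i; last have [->|xj] := eqVneq x j; rewrite ?eqxx ?iS ?jS ?(negPf nij) ?(negPf nji) ?(negPf xi) ?(negPf xj) /= ?orbT ?orbF ?andbF ?andbT // ?eq_sym ?(negPf nij) // ; move: nij; rewrite ?eqxx.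
  have ES' : S :\ i = T :|: [set j].
    by apply/setP=> x; rewrite !inE; have [->|xi] := eqVneq x i; last have [->|xj] := eqVneq x j; rewrite ?eqxx ?iS ?jS ?(negPf nij) ?(negPf nji) ?(negPf xi) ?(negPf xj) /= ?orbT ?orbF ?andbF ?andbT // ?eq_sym ?(negPf nij) // ; move: nij; rewrite ?eqxx.
  rewrite ES' -h4 -ES' nSW /= andbT.
  move: SW; rewrite {1}ES h1 -h4 -ES' (negPf nSW) orbF => Wi; rewrite ES.
  apply: (mon (T :|: [set i; j]) (T :|: [set i])) Wi; apply/subsetP=> x; rewrite !inE => /orP[->|->]; rewrite ?orbT //.
- have ES : S = T :|: [set i].
    by apply/setP=> x; rewrite !inE; have [->|xi] := eqVneq x i; last have [->|xj] := eqVneq x j; rewrite ?eqxx ?iS ?jS ?(negPf nij) ?(negPf nji) ?(negPf xi) ?(negPf xj) /= ?orbT ?orbF ?andbF ?andbT // ?eq_sym ?(negPf nij) // ; move: nij; rewrite ?eqxx.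
  have ES' : S :\ i = T.
    by apply/setP=> x; rewrite !inE; have [->|xi] := eqVneq x i; last have [->|xj] := eqVneq x j; rewrite ?eqxx ?iS ?jS ?(negPf nij) ?(negPf nji) ?(negPf xi) ?(negPf xj) /= ?orbT ?orbF ?andbF ?andbT // ?eq_sym ?(negPf nij) // ; move: nij; rewrite ?eqxx.
  move: SW nSW; rewrite ES' h2; move/(congr1 (fun X => X \in Wh)): (ES) => ->; rewrite h3 => Wi; rewrite Wi /= => nWj.
  have -> : S \in W by rewrite ES. 
  rewrite /=; apply/negP=> WT; move/negP: nWj; apply; apply: (mon (T :|: [set j]) T) WT.
  by apply/subsetP=> x; rewrite !inE => ->.
Qed.

Theorem theorem15 (n : nat) (W Wh : game n) (i j : 'I_n) :
  monotonic W -> i != j -> sym_weak_quarrel W Wh i j ->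
  PB Wh i <= PB W i /\ PB Wh j <= PB W j.
Proof.
move=> mon nij Q.
have key k l : k != l -> sym_weak_quarrel W Wh k l -> PB Wh k <= PB W k.
  move=> nkl Q'; rewrite /PB ler_pM2r ?invr_gt0 ?ltr0n ?expn_gt0 //.
  by rewrite ler_nat; apply: subset_leq_card; apply: dec_sub nkl Q'.
by split; [apply: (key i j) | apply: (key j i); [rewrite eq_sym | exact: quarrel_sym]].
Qed.
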